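(* Let $x\in\mathbb{R}^n$, $k\ge1$ and $p\in(0,1]$. Suppose we subsample $x$ with probability $p$, i.e. each coordinate $i\in[n]$ is independently kept with probability $p$ and otherwise set to zero, and let $y$ be the resulting subsampled vector. Then with failure probability $e^{-\Omega(k)}$, $$\|y_{-2k}\|_2\le\sqrt{2p}\,\|x_{-k/p}\|_2 .$$
   Context: For a vector $v$ and $s\ge 0$, $v_{-s}$ denotes $v$ with its $s$ largest coordinates in absolute value zeroed out. *)

(* Defs.v *)
From HB Require Import structures.
From mathcomp Require Import all_boot all_order all_algebra.
From mathcomp Require Import reals.
From mathcomp Require Import sequences exp.
Set Implicit Arguments. Unset Strict Implicit. Unset Printing Implicit Defensive.
Import Order.TTheory GRing.Theory Num.Theory.
Local Open Scope ring_scope.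

Section Defs.
Variable R : realType.

Definition top_idx (n : nat) (x : 'rV[R]_n) (s : nat) : seq 'I_n :=
  take s (sort (fun i j : 'I_n => `|x ord0 j| <= `|x ord0 i|) (enum 'I_n)).

Definition tailv (n : nat) (x : 'rV[R]_n) (s : nat) : 'rV[R]_n :=
  \row_i (if i \in top_idx x s then 0 else x ord0 i).

Definition l2norm (n : nat) (x : 'rV[R]_n) : R :=
  Num.sqrt (\sum_i (x ord0 i) ^+ 2).

Definition subsample (n : nat) (x : 'rV[R]_n) (S : {set 'I_n}) : 'rV[R]_n :=
  \row_i (if i \in S then x ord0 i else 0).

(* Probability that the set of kept coordinates is exactly S, when each
   coordinate is kept independently with probability p. *)
Definition keep_prob (n : nat) (p : R) (S : {set 'I_n}) : R :=
  p ^+ #|S| * (1 - p) ^+ (n - #|S|).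

Definition subsample_prob (n : nat) (p : R) (E : pred {set 'I_n}) : R :=
  \sum_(S in {set 'I_n} | E S) keep_prob p S.

End Defs.

(* Main.v *)
Require Import Defs.
From HB Require Import structures.
From mathcomp Require Import all_boot all_order all_algebra.
From mathcomp Require Import reals.
From mathcomp Require Import sequences exp.
From mathcomp Require Import ring lra.
Import Order.TTheory GRing.Theory Num.Theory.
Local Open Scope ring_scope.
Set Implicit Arguments. Unset Strict Implicit.

Lemma kpE (R : realType) n (p : R) (S : {set 'I_n}) :
  keep_prob p S = \prod_i (if i \in S then p else 1 - p).
Proof.
rewrite /keep_prob (bigID (mem S)) /=.
rewrite (eq_bigr (fun _ => p)); last by move=> i ->.
rewrite [X in _ = _ * X](eq_bigr (fun _ => 1 - p)); last by move=> i /negbTE ->.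
rewrite prodr_const prodr_const.
congr (_ ^+ _ * _ ^+ _).
have hc := cardC (mem S); rewrite card_ord in hc.
move: hc => /(congr1 (subn^~ #|S|)); rewrite addKn => <-.
by apply: eq_card => i.
Qed.

Lemma mgf (R : realType) n (p : R) (g : 'I_n -> R) :
  \sum_(S : {set 'I_n}) keep_prob p S * \prod_(i in S) g i
  = \prod_i (1 - p + p * g i).
Proof.
transitivity (\prod_i \sum_(b : bool) (if b then p * g i else 1 - p)); last first.
  by apply: eq_bigr => i _; rewrite big_bool /= addrC.
rewrite bigA_distr_bigA /=.
rewrite (reindex (fun S : {set 'I_n} => [ffun i => i \in S])) /=; last first.
  exists (fun f : {ffun 'I_n -> bool} => [set i | f i]).
    by move=> S _; apply/setP => i; rewrite inE ffunE.
  by move=> f _; apply/ffunP => i; rewrite ffunE inE.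
apply: eq_bigr => S _.
rewrite kpE [X in _ * X]big_mkcond /= -big_split /=.
by apply: eq_bigr => i _; rewrite ffunE; case: (i \in S); rewrite ?mulr1.
Qed.

Lemma spE (R : realType) n (p : R) (E : pred {set 'I_n}) :
  subsample_prob p E = \sum_S (if E S then keep_prob p S else 0).
Proof. by rewrite /subsample_prob big_mkcond. Qed.

Lemma kp_ge0 (R : realType) n (p : R) (S : {set 'I_n}) :
  0 <= p -> p <= 1 -> 0 <= keep_prob p S.
Proof. by move=> h0 h1; rewrite /keep_prob mulr_ge0 // exprn_ge0 // subr_ge0. Qed.

Lemma sp_total (R : realType) n (p : R) (E : pred {set 'I_n}) :
  0 <= p -> p <= 1 -> subsample_prob p E <= 1.
Proof.
move=> h0 h1.
have : \sum_(S : {set 'I_n}) keep_prob p S * \prod_(i in S) (1 : R) = 1.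
  by rewrite mgf; apply: big1 => i _; rewrite mulr1 subrK.
under eq_bigr do rewrite big1_eq mulr1.
move=> <-; rewrite spE; apply: ler_sum => S _.
by case: (E S) => //; apply: kp_ge0.
Qed.

Lemma sp_union (R : realType) n (p : R) (E E1 E2 : pred {set 'I_n}) :
  0 <= p -> p <= 1 -> (forall S, E S -> E1 S || E2 S) ->
  subsample_prob p E <= subsample_prob p E1 + subsample_prob p E2.
Proof.
move=> h0 h1 hE; rewrite !spE -big_split /=; apply: ler_sum => S _.
have := kp_ge0 S h0 h1.
case hS: (E S); case: (E1 S) (E2 S) (hE S) => [] [] //=; rewrite ?addr0 ?add0r //.
- by move=> _ h; rewrite lerDl.
- by move=> /(_ hS).
- by move=> _ h; rewrite addr_ge0.
Qed.

Lemma markov (R : realType) n (p : R) (E : pred {set 'I_n}) (F : {set 'I_n} -> R) :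
  0 <= p -> p <= 1 -> (forall S, 0 <= F S) -> (forall S, E S -> 1 <= F S) ->
  subsample_prob p E <= \sum_S keep_prob p S * F S.
Proof.
move=> h0 h1 hF hE; rewrite spE; apply: ler_sum => S _.
have hk := kp_ge0 S h0 h1.
case hS: (E S).
  by rewrite -{1}(mulr1 (keep_prob p S)) ler_wpM2l // hE.
by rewrite mulr_ge0.
Qed.
Lemma exp_small (R : realType) (a : R) : 0 <= a -> a <= 1/4 -> expR a <= 1 + 4/3 * a.
Proof.
move=> h0 h1.
have hE := expR_gt0 a.
have h := expR_ge1Dx (- a); rewrite expRN in h.
have h2 : expR a * (1 - a) <= 1.
  by have := ler_wpM2l (ltW hE) h; rewrite mulfV // lt0r_neq0.
nra.
Qed.

Lemma chernoff (R : realType) n (p : R) (w : 'I_n -> R) (t : R) :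
  0 < p -> p <= 1 -> (forall i, 0 <= w i <= 1) ->
  subsample_prob p (fun S : {set 'I_n} => t < \sum_(i in S) w i)
  <= expR (p * (\sum_i w i) / 3 - t / 4).
Proof.
move=> hp0 hp1 hw.
apply: le_trans (markov (F := fun S => expR (\sum_(i in S) (w i / 4) + - (t / 4))) _ _ _ _) _.
- exact: ltW.
- exact: hp1.
- by move=> S; apply: expR_ge0.
- move=> S /= hS; rewrite -[X in X <= _]expR0 ler_expR -mulr_suml; lra.
under eq_bigr do rewrite expRD expR_sum mulrA.
rewrite -mulr_suml mgf.
have -> : p * (\sum_i w i) / 3 - t / 4 = \sum_i (p * w i / 3) + - (t / 4).
  by rewrite mulr_sumr mulr_suml.
rewrite expRD ler_wpM2r ?expR_ge0 // expR_sum.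
apply: ler_prod => i _.
have [w0 w1] := andP (hw i).
have he := @exp_small R (w i / 4) ltac:(lra) ltac:(lra).
have hg := expR_ge1Dx (p * w i / 3).
have he0 := expR_gt0 (w i / 4).
apply/andP; split; nra.
Qed.

Definition srt (R : realType) n (y : 'rV[R]_n) : seq 'I_n :=
  sort (fun i j : 'I_n => `|y ord0 j| <= `|y ord0 i|) (enum 'I_n).

Lemma top_idxE (R : realType) n (y : 'rV[R]_n) m : top_idx y m = take m (srt y).
Proof. by []. Qed.

Lemma srt_uniq (R : realType) n (y : 'rV[R]_n) : uniq (srt y).
Proof. by rewrite sort_uniq enum_uniq. Qed.

Lemma mem_srt (R : realType) n (y : 'rV[R]_n) i : i \in srt y.
Proof. by rewrite mem_sort mem_enum. Qed.

Lemma size_srt (R : realType) n (y : 'rV[R]_n) : size (srt y) = n.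
Proof. by rewrite size_sort size_enum_ord. Qed.

Lemma top_le (R : realType) n (y : 'rV[R]_n) m i j :
  i \in take m (srt y) -> j \notin take m (srt y) -> `|y ord0 j| <= `|y ord0 i|.
Proof.
move=> hi hj.
have hs : sorted (fun i j : 'I_n => `|y ord0 j| <= `|y ord0 i|) (srt y).
  by apply: sort_sorted => a b; apply: le_total.
rewrite sorted_pairwise in hs; last by move=> b a c h1 h2; apply: le_trans h2 h1.
rewrite -(cat_take_drop m (srt y)) pairwise_cat in hs.
case/and3P: hs => /allrelP h _ _; apply: h => //.
by have := @mem_srt R n y j; rewrite -{1}(cat_take_drop m (srt y)) mem_cat (negbTE hj).
Qed.

Lemma tail_sum (R : realType) n (y : 'rV[R]_n) m :
  \sum_i (tailv y m) ord0 i ^+ 2 = \sum_(i | i \notin top_idx y m) y ord0 i ^+ 2.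
Proof.
rewrite [RHS]big_mkcond; apply: eq_bigr => i _; rewrite mxE.
by case: (i \in top_idx y m) => //=; rewrite expr2 mulr0.
Qed.

Lemma opt_gen (R : realType) n (f : 'I_n -> R) (Tp A : {set 'I_n}) :
  (forall i, 0 <= f i) ->
  (A :\: Tp != set0 -> (#|A :\: Tp| <= #|Tp :\: A|)%N) ->
  (forall a b, a \in A :\: Tp -> b \in Tp :\: A -> f a <= f b) ->
  \sum_(i | i \notin Tp) f i <= \sum_(i | i \notin A) f i.
Proof.
move=> f0 hc hp.
have eT : \sum_i f i = \sum_(i in Tp) f i + \sum_(i | i \notin Tp) f i.
  by rewrite [LHS](bigID (fun i => i \in Tp)).
have eA : \sum_i f i = \sum_(i in A) f i + \sum_(i | i \notin A) f i.
  by rewrite [LHS](bigID (fun i => i \in A)).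
suff h : \sum_(i in A) f i <= \sum_(i in Tp) f i by lra.
have e1 : \sum_(i in A) f i = \sum_(i in A :&: Tp) f i + \sum_(i in A :\: Tp) f i.
  rewrite (bigID (fun i => i \in Tp)) /=; congr (_ + _); apply: eq_bigl => i;
  by rewrite !inE // andbC.
have e2 : \sum_(i in Tp) f i = \sum_(i in A :&: Tp) f i + \sum_(i in Tp :\: A) f i.
  rewrite (bigID (fun i => i \in A)) /=; congr (_ + _); apply: eq_bigl => i;
  by rewrite !inE // andbC.
rewrite e1 e2 lerD2l.
have [C0|Cn0] := eqVneq (A :\: Tp) set0.
  by rewrite C0 big_set0 sumr_ge0.
have hc' := hc Cn0.
have hB : (0 < #|Tp :\: A|)%N.
  apply: leq_trans hc'; rewrite lt0n cards_eq0; exact: Cn0.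
set B := Tp :\: A in hc' hB hp *; set C := A :\: Tp in hc' hB hp Cn0 *.
have e3 : \sum_(a in C) \sum_(b in B) f a = #|B|%:R * \sum_(a in C) f a.
  by rewrite mulr_sumr; apply: eq_bigr => a _; rewrite sumr_const mulr_natl.
have e4 : \sum_(a in C) \sum_(b in B) f b = #|C|%:R * \sum_(b in B) f b.
  by rewrite sumr_const mulr_natl.
have h3 : \sum_(a in C) \sum_(b in B) f a <= \sum_(a in C) \sum_(b in B) f b.
  by apply: ler_sum => a ha; apply: ler_sum => b hb; apply: hp.
rewrite e3 e4 in h3.
have h4 : #|C|%:R * \sum_(b in B) f b <= #|B|%:R * \sum_(b in B) f b :> R.
  by apply: ler_wpM2r; [apply: sumr_ge0 | rewrite ler_nat].
rewrite -(ler_pM2l (_ : 0 < #|B|%:R :> R)) ?ltr0n //.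
exact: le_trans h3 h4.
Qed.

Lemma opt (R : realType) n (y : 'rV[R]_n) m (A : {set 'I_n}) :
  (#|A| <= m)%N ->
  \sum_i (tailv y m) ord0 i ^+ 2 <= \sum_(i | i \notin A) y ord0 i ^+ 2.
Proof.
move=> hA; rewrite tail_sum.
set Tp := [set i | i \in top_idx y m].
have -> : \sum_(i | i \notin top_idx y m) y ord0 i ^+ 2 = \sum_(i | i \notin Tp) y ord0 i ^+ 2.
  by apply: eq_bigl => i; rewrite inE.
apply: opt_gen.
- by move=> i; apply: sqr_ge0.
- case/set0Pn => j; rewrite !inE => /andP [hjT hjA].
  have hmn : (m < n)%N.
    rewrite ltnNge; apply/negP => hnm; move: hjT.
    by rewrite top_idxE take_oversize ?size_srt // mem_srt.
  have cT : #|Tp| = m.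
    rewrite cardsE; move/card_uniqP: (take_uniq m (srt_uniq y)) => ->.
    by rewrite size_take size_srt hmn.
  by rewrite !cardsD cT setIC; apply: leq_sub2r.
- move=> a b; rewrite !inE => /andP [ha _] /andP [_ hb].
  have := top_le hb ha.
  rewrite -(real_normK (num_real (y ord0 a))) -(real_normK (num_real (y ord0 b))).
  by move=> h; have := normr_ge0 (y ord0 a); nra.
Qed.

Lemma sub_sum (R : realType) n (f : 'I_n -> R) (P Q : pred 'I_n) :
  (forall i, 0 <= f i) -> (forall i, P i -> Q i) ->
  \sum_(i | P i) f i <= \sum_(i | Q i) f i.
Proof.
move=> f0 hPQ; rewrite [X in X <= _]big_mkcond [X in _ <= X]big_mkcond.
apply: ler_sum => i _; case hP: (P i); first by rewrite hPQ.
by case: (Q i).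
Qed.

Lemma block (R : realType) n (y : 'rV[R]_n) T M i :
  i \notin take (T + M) (srt y) ->
  M%:R * y ord0 i ^+ 2 <= \sum_(j | j \notin top_idx y T) y ord0 j ^+ 2.
Proof.
move=> hi.
have hTn : (T + M < n)%N.
  rewrite ltnNge; apply/negP => hnm; move: hi.
  by rewrite take_oversize ?size_srt // mem_srt.
set B := take M (drop T (srt y)).
have hu := take_uniq (T + M) (srt_uniq y).
rewrite takeD cat_uniq in hu; case/and3P: hu => _ hdis huB.
have sB : size B = M.
  by rewrite size_take size_drop size_srt ltn_subRL hTn.
have cB : #|B| = M by move/card_uniqP: huB => ->.
have -> : M%:R * y ord0 i ^+ 2 = \sum_(j in B) y ord0 i ^+ 2.
  by rewrite sumr_const cB mulr_natl.
apply: (@le_trans _ _ (\sum_(j in B) y ord0 j ^+ 2)).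
  apply: ler_sum => j hj.
  have hj' : j \in take (T + M) (srt y) by rewrite takeD mem_cat hj orbT.
  have := top_le hj' hi.
  rewrite -(real_normK (num_real (y ord0 i))) -(real_normK (num_real (y ord0 j))).
  by move=> h; have := normr_ge0 (y ord0 i); nra.
apply: sub_sum => [j|j hj]; first exact: sqr_ge0.
apply/negP => hjT; move/hasP: hdis; apply; exists j => //.
Qed.

Lemma sp_mono (R : realType) n (p : R) (E E' : pred {set 'I_n}) :
  0 <= p -> p <= 1 -> (forall S, E S -> E' S) ->
  subsample_prob p E <= subsample_prob p E'.
Proof.
move=> h0 h1 hE; rewrite !spE; apply: ler_sum => S _.
have := kp_ge0 S h0 h1.
by case hS: (E S); [rewrite hE | case: (E' S)].
Qed.

Lemma sp_false (R : realType) n (p : R) (E : pred {set 'I_n}) :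
  (forall S, ~~ E S) -> subsample_prob p E = 0.
Proof. by move=> hE; rewrite spE big1 // => S _; rewrite (negbTE (hE S)). Qed.

Lemma card_take_le (T : finType) (s : seq T) m : (#|mem (take m s)| <= m)%N.
Proof.
apply: leq_trans (card_size _) _; rewrite size_take.
by case: ifP => // /negbT; rewrite -leqNgt.
Qed.

Lemma notin_take_le (T : eqType) (s : seq T) a b i :
  i \notin take (a + b) s -> i \notin take a s.
Proof. by rewrite takeD mem_cat negb_or => /andP []. Qed.

Theorem lemma1 (R : realType) :
  exists (c C : R), 0 < c /\ 0 < C /\
  forall (n : nat) (x : 'rV[R]_n) (k : nat) (p : R),
    (1 <= k)%N -> 0 < p -> p <= 1 ->
    subsample_prob p
      (fun S : {set 'I_n} =>
         ~~ (l2norm (tailv (subsample x S) (2 * k)%N)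
             <= Num.sqrt (2 * p) * l2norm (tailv x (Num.truncn (k%:R / p)))))
    <= C * expR (- (c * k%:R)).
Proof.
exists (1/48), (2 * expR 1); split; first lra.
split; first by rewrite mulr_gt0 ?expR_gt0.
move=> n x k p hk hp0 hp1.
have hp0' : 0 <= p by apply: ltW.
have hk0 : 0 <= k%:R :> R by [].
have [k8|k8] := ltnP k 8.
  apply: le_trans (sp_total _ hp0' hp1) _.
  have hk' : k%:R <= 7 :> R by rewrite ler_nat -ltnS.
  rewrite -mulrA -expRD.
  have := @expR_ge1Dx R (1 + - (1 / 48 * k%:R)).
  lra.
have hk8 : 8 <= k%:R :> R by rewrite ler_nat.
set T := Num.truncn (k%:R / p).
set M := Num.truncn (k%:R / (4 * p)).
have hT : T%:R * p <= k%:R.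
  rewrite -ler_pdivlMr //.
  by case/andP: (truncn_itv (divr_ge0 hk0 hp0')).
have h4p : 0 < 4 * p by rewrite mulr_gt0.
have hM : M%:R * (4 * p) <= k%:R.
  rewrite -ler_pdivlMr //.
  by case/andP: (truncn_itv (divr_ge0 hk0 (ltW h4p))).
have hM2 : k%:R < (M%:R + 1) * (4 * p).
  rewrite -ltr_pdivrMr // natr1.
  by case/andP: (truncn_itv (divr_ge0 hk0 (ltW h4p))) => _ h.
have hM0 : 0 <= M%:R :> R by [].
have hM1 : 1 <= M%:R :> R by nra.
have hpM : k%:R <= 8 * p * M%:R by nra.
set s := srt x.
set H' := take (T + M) s.
set N := \sum_i (tailv x T) ord0 i ^+ 2.
have N0 : 0 <= N by apply: sumr_ge0 => i _; apply: sqr_ge0.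
have hN : N = \sum_(j | j \notin top_idx x T) x ord0 j ^+ 2 by rewrite /N tail_sum.
have hblk : forall i, i \notin H' -> M%:R * x ord0 i ^+ 2 <= N.
  by move=> i hi; rewrite hN; apply: block.
set E1 := fun S : {set 'I_n} =>
  (2 * k)%:R < \sum_(i in S) (if i \in H' then 1 else 0 : R).
set E2 := fun S : {set 'I_n} =>
  2 * p * N < \sum_(i in S) (if i \in H' then 0 else x ord0 i ^+ 2).
apply: le_trans (sp_union (E1 := E1) (E2 := E2) hp0' hp1 _) _.
  move=> S; apply: contraLR; rewrite negb_or negbK /E1 /E2 -!leNgt => /andP [h1 h2].
  set A := S :&: [set i | i \in H'].
  have cA : (#|A| <= 2 * k)%N.
    rewrite -(ler_nat R); apply: le_trans h1.
    rewrite -big_mkcondr /= sumr_const.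
    by rewrite ler_nat; apply: eq_leq; apply: eq_card => i; rewrite !inE.
  rewrite /l2norm.
  have e : \sum_(i | i \notin A) (subsample x S) ord0 i ^+ 2
         = \sum_(i in S) (if i \in H' then 0 else x ord0 i ^+ 2).
    rewrite big_mkcond [RHS]big_mkcond; apply: eq_bigr => i _.
    rewrite mxE !inE.
    by case: (i \in S); case: (i \in H') => //=; rewrite expr2 mulr0.
  have hle := opt (subsample x S) cA; rewrite e in hle.
  rewrite -sqrtrM; last by rewrite mulr_ge0.
  rewrite ler_sqrt; last by rewrite !mulr_ge0.
  exact: le_trans hle h2.
have -> : 2 * expR 1 * expR (- (1 / 48 * k%:R)) =
          expR 1 * expR (- (1 / 48 * k%:R)) + expR 1 * expR (- (1 / 48 * k%:R)) :> R.
  by rewrite -mulrA mulrDl mul1r.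
have hex : forall z : R, expR z <= expR 1 * expR z.
  move=> z; rewrite ler_pMl ?expR_gt0 //.
  by have := @expR_ge1Dx R 1; lra.
apply: lerD.
- apply: le_trans (chernoff _ hp0 hp1 _) _.
    by move=> i; case: (i \in H'); rewrite ?lexx ?ler01.
  apply: le_trans (hex _); rewrite ler_expR.
  have hs : \sum_i (if i \in H' then 1 else 0 : R) <= T%:R + M%:R.
    rewrite -big_mkcondr /= sumr_const -natrD ler_nat.
    by apply: leq_trans (card_take_le _ _) _.
  have : p * (\sum_i (if i \in H' then 1 else 0 : R)) <= k%:R + k%:R / 4.
    by nra.
  rewrite natrM; lra.
- have [N00|Npos] := eqVneq N 0.
    rewrite sp_false; first by rewrite mulr_ge0 ?expR_ge0.
    move=> S; rewrite /E2 N00 mulr0 -leNgt.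
    apply: sumr_le0 => i _; case hi: (i \in H') => //.
    have := hblk i (negbT hi); rewrite N00 => h.
    have := sqr_ge0 (x ord0 i); nra.
  have Np : 0 < N by rewrite lt0r Npos.
  set w := fun i => (if i \in H' then 0 else x ord0 i ^+ 2) * (M%:R / N).
  apply: le_trans (sp_mono (E' := fun S => 2 * p * M%:R < \sum_(i in S) w i) hp0' hp1 _) _.
    move=> S; rewrite /E2 /w -mulr_suml => h.
    have hMN : 0 < M%:R / N by rewrite divr_gt0 // ltr0n -(ltr_nat R); lra.
    move: h; rewrite -(ltr_pM2r hMN) => h'; apply: le_lt_trans h'.
    rewrite le_eqVlt; apply/orP; left; apply/eqP; field; exact: Npos.
  apply: le_trans (chernoff _ hp0 hp1 _) _.
    move=> i; rewrite /w; case hi: (i \in H'); first by rewrite mul0r lexx ler01.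
    have := hblk i (negbT hi) => h.
    apply/andP; split; first by rewrite mulr_ge0 ?sqr_ge0 ?divr_ge0 //; lra.
    by rewrite mulrA ler_pdivrMr // mul1r mulrC.
  apply: le_trans (hex _); rewrite ler_expR.
  have hs : \sum_i w i <= M%:R.
    rewrite /w -mulr_suml.
    have : \sum_i (if i \in H' then 0 else x ord0 i ^+ 2) <= N.
      rewrite hN [X in _ <= X]big_mkcond /=; apply: ler_sum => j _.
      case hj: (j \in H'); first by case: ifP => // _; apply: sqr_ge0.
      by rewrite (notin_take_le (negbT hj)).
    move=> h; rewrite mulrA ler_pdivrMr //; nra.
  nra.
Qed.
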